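(* Let $n\geq 3$, let $X=\mathbb{R}^n$ or $X=S^n$ (the unit sphere in $\mathbb{R}^{n+1}$), and let $\Gamma=\mathrm{Isom}(X)$. Then there exist uncountable sets $W\subset X$ whose pointwise stabilizer in $\Gamma$ is trivial but for which $P(W)$ (with respect to $\Gamma$ and $2$ colors) does not hold; i.e., there is a precoloring $X\setminus W\to\{R,B\}$ admitting no $\Gamma$-distinguishing extension to $X$. In particular $\mathrm{ext}_D(X,\Gamma)=\infty$.
   Context: Let a group $\Gamma$ act faithfully on a set $X$. A coloring $c:X\to\{R,B\}$ is $\Gamma$-distinguishing if the only $\gamma\in\Gamma$ with $c\circ\gamma=c$ is the identity. For $W\subset X$ whose pointwise stabilizer in $\Gamma$ is trivial, the property $P(W)$ holds if every precoloring $c:X\setminus W\to\{R,B\}$ can be extended to a $\Gamma$-distinguishing coloring $X\to\{R,B\}$. The distinguishing extension number $\mathrm{ext}_D(X,\Gamma)$ is the smallest $m$ such that every $W\subset X$ with $|W|\geq m$ and trivial pointwise stabilizer satisfies $P(W)$ ($\infty$ if none exists). *)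

(* Defs.v *)
From Stdlib Require Import Reals.
From mathcomp Require Import all_boot.
Set Implicit Arguments.
Unset Strict Implicit.
Unset Printing Implicit Defensive.

Open Scope R_scope.

Definition Rn (n : nat) : Type := 'I_n -> R.

Definition sqnorm (n : nat) (x : Rn n) : R :=
  \big[Rplus/0]_(i < n) Rsqr (x i).

Definition edist (n : nat) (x y : Rn n) : R :=
  sqrt (\big[Rplus/0]_(i < n) Rsqr (x i - y i)).

(* The unit sphere S^n in R^(n+1), with the restricted Euclidean (chordal)
   metric; its isometry group coincides with that for the geodesic metric. *)
Definition Sphere (n : nat) : Type := { x : Rn n.+1 | sqnorm x = 1 }.

Definition sdist (n : nat) (x y : Sphere n) : R := edist (proj1_sig x) (proj1_sig y).

Definition isometry (T : Type) (d : T -> T -> R) (g : T -> T) : Prop :=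
  (forall x y, d (g x) (g y) = d x y) /\ (forall y, exists x, g x = y).

(* Colors: true = R, false = B.  A subset of X is a predicate T -> Prop. *)

Definition distinguishing (T : Type) (Gamma : (T -> T) -> Prop) (c : T -> bool) : Prop :=
  forall g, Gamma g -> (forall x, c (g x) = c x) -> forall x, g x = x.

Definition trivial_pointwise_stabilizer (T : Type) (Gamma : (T -> T) -> Prop)
  (W : T -> Prop) : Prop :=
  forall g, Gamma g -> (forall x, W x -> g x = x) -> forall x, g x = x.

(* Property P(W): every precoloring of X \ W extends to a distinguishing
   coloring.  A precoloring of X \ W is represented by a total c0 : T -> bool,
   of which only the values off W are used. *)
Definition prop_P (T : Type) (Gamma : (T -> T) -> Prop) (W : T -> Prop) : Prop :=
  forall c0 : T -> bool,
    exists c : T -> bool,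
      (forall x, ~ W x -> c x = c0 x) /\ distinguishing Gamma c.

Definition uncountable (T : Type) (W : T -> Prop) : Prop :=
  ~ exists f : nat -> T, forall x, W x -> exists k, f k = x.

Definition card_ge (T M : Type) (W : T -> Prop) : Prop :=
  exists f : M -> T, (forall m, W (f m)) /\ (forall m1 m2, f m1 = f m2 -> m1 = m2).

(* ext_D(X,Gamma) = infinity: no cardinal m (ranging over cardinals <= |X|,
   i.e. types M injecting into T) has the property that every W with |W| >= m
   and trivial pointwise stabilizer satisfies P(W). *)
Definition extD_infinite (T : Type) (Gamma : (T -> T) -> Prop) : Prop :=
  forall M : Type,
    (exists h : M -> T, forall m1 m2, h m1 = h m2 -> m1 = m2) ->
    exists W : T -> Prop,
      card_ge M W /\ trivial_pointwise_stabilizer Gamma W /\ ~ prop_P Gamma W.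

Definition theorem2_conclusion (T : Type) (d : T -> T -> R) : Prop :=
  (exists W : T -> Prop,
      uncountable W /\
      trivial_pointwise_stabilizer (isometry d) W /\
      ~ prop_P (isometry d) W)
  /\ extD_infinite (isometry d).

(* Main.v *)
Require Import Defs.
From HB Require Import structures.
From Stdlib Require Import Reals Lra Lia ZArith ClassicalEpsilon Classical FunctionalExtensionality ProofIrrelevance.
From mathcomp Require Import all_boot perm.
Set Implicit Arguments.
Unset Strict Implicit.
Unset Printing Implicit Defensive.
Open Scope R_scope.

Lemma Rplus_assoc' : associative Rplus.
Proof. by move=> x y z; rewrite Rplus_assoc. Qed.
HB.instance Definition _ := Monoid.isComLaw.Build R 0 Rplus Rplus_assoc' Rplus_comm Rplus_0_l.

Lemma uncount_of_inj T (W : T -> Prop) (i : (nat -> bool) -> T) :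
  injective i -> (forall b, W (i b)) -> uncountable W.
Proof.
move=> ii Wi [f Hf].
have inh : inhabited (nat -> bool) by constructor; exact (fun _ => false).
pose bs := fun k => negb (epsilon inh (fun b => i b = f k) k).
have [k Hk] := Hf _ (Wi bs).
have := epsilon_spec inh (fun b => i b = f k) (ex_intro _ bs (esym Hk)).
move=> H.
have E : epsilon inh (fun b => i b = f k) = bs by apply: ii; rewrite H Hk.
have : bs k = negb (epsilon inh (fun b => i b = f k) k) by [].
by rewrite E; case: (bs k).
Qed.

Lemma concl_generic T d (W : T -> Prop) (enc : T -> nat -> bool) (i : (nat -> bool) -> T) :
  injective enc -> injective i -> (forall b, W (i b)) ->
  trivial_pointwise_stabilizer (isometry d) W -> ~ prop_P (isometry d) W ->
  theorem2_conclusion d.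
Proof.
move=> ie ii Wi Hs Hp; split.
  exists W; split=> //; exact: uncount_of_inj ii Wi.
move=> M [h hi]; exists W; split; last by split.
exists (fun m => i (enc (h m))); split=> [m|m1 m2 /ii/ie/hi] //.
Qed.

Lemma notP_generic T d (W1 : T -> Prop) (e0 e1 : T) (g0 g1 gs : T -> T) :
  isometry d g0 -> isometry d g1 -> isometry d gs ->
  (forall x, g0 (g0 x) = x) -> (forall x, g1 (g1 x) = x) -> (forall x, gs (gs x) = x) ->
  (forall x, W1 x -> g0 x = x) -> (forall x, W1 x -> g1 x = x) -> (forall x, W1 x -> gs x = x) ->
  ~ W1 (g0 e0) -> g0 e0 <> e0 -> g0 e0 <> e1 -> g0 e1 = e1 ->
  g1 e0 = e0 -> ~ W1 (g1 e1) -> g1 e1 <> e0 -> g1 e1 <> e1 ->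
  gs e0 = e1 -> gs e1 = e0 -> e0 <> e1 ->
  ~ prop_P (isometry d) (fun x => W1 x \/ x = e0 \/ x = e1).
Proof.
move=> I0 I1 Is V0 V1 Vs F0 F1 Fs A1 A2 A3 A4 B1 B2 B3 B4 C1 C2 ne HP.
have [c [Hc Hd]] := HP (fun _ => true).
have key : forall g, (forall x, g (g x) = x) -> (forall x, W1 x -> g x = x) ->
   c (g e0) = c e0 -> c (g e1) = c e1 -> forall x, c (g x) = c x.
  move=> g Vg Fg H0 H1 x.
  case: (classic (W1 x)) => [/Fg -> //|nW].
  case: (classic (x = e0)) => [-> //|n0].
  case: (classic (x = e1)) => [-> //|n1].
  rewrite (Hc x); last by case=> [|[]].
  case: (classic (W1 (g x))) => [Wg|nW'].
    by have := Fg _ Wg; rewrite Vg => E; case: nW; rewrite E.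
  case: (classic (g x = e0)) => [E|m0].
    by rewrite E -H0 -E Vg Hc //; case=> [|[]].
  case: (classic (g x = e1)) => [E|m1].
    by rewrite E -H1 -E Vg Hc //; case=> [|[]].
  by rewrite Hc //; case=> [|[]].
have nW : forall y, y <> e0 -> y <> e1 -> ~ W1 y -> c y = true.
  by move=> y a b e; apply: Hc; case=> [|[]].
case E0: (c e0).
  have K : c (g0 e0) = c e0 by rewrite E0 nW.
  have K' : c (g0 e1) = c e1 by rewrite A4.
  by apply: A2; apply: (Hd g0 I0 (key g0 V0 F0 K K')).
case E1: (c e1).
  have K : c (g1 e1) = c e1 by rewrite E1 nW.
  have K' : c (g1 e0) = c e0 by rewrite B1.
  by apply: B4; apply: (Hd g1 I1 (key g1 V1 F1 K' K)).
have K : c (gs e1) = c e1 by rewrite C2 E0 E1.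
have K' : c (gs e0) = c e0 by rewrite C1 E0 E1.
by apply: ne; rewrite -{1}C2; apply: (Hd gs Is (key gs Vs Fs K' K)).
Qed.
Definition dv (p : bool * nat * nat) : R :=
  (if p.1.1 then INR p.1.2 else - INR p.1.2) / INR p.2.+1.

Definition encR (x : R) (k : nat) : bool :=
  if (unpickle k : option (bool * nat * nat)) is Some p then
    (if Rlt_dec (dv p) x then true else false) else false.

Lemma dense x y : x < y -> exists p, x <= dv p < y.
Proof.
move=> xy.
have [N [HN N0]] := archimed_cor1 (y - x) ltac:(lra).
have NP : 0 < INR N by apply: lt_0_INR; lia.
set z := up (INR N * x).
have [z1 z2] := archimed (INR N * x).
have Ez : IZR z = (if Z.leb 0 z then INR (Z.abs_nat z) else - INR (Z.abs_nat z)).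
  rewrite INR_IZR_INZ Nat2Z.inj_abs_nat abs_IZR.
  case: (Z.leb_spec 0 z) => h.
    by rewrite Rabs_right //; apply: Rle_ge; apply: IZR_le.
  rewrite Rabs_left; first by lra.
  by apply: IZR_lt.
exists (Z.leb 0 z, Z.abs_nat z, N.-1); rewrite /dv; change (x <= (if Z.leb 0 z then INR (Z.abs_nat z) else - INR (Z.abs_nat z)) / INR N.-1.+1 < y); rewrite -Ez.
have -> : N.-1.+1 = N by rewrite prednK //; apply/ltP.
split.
  apply: Rlt_le; apply/(Rmult_lt_reg_l (INR N)) => //.
  have -> : INR N * (IZR z / INR N) = IZR z by field; lra.
  by fold z in z1; lra.
have H1 : IZR z <= INR N * x + 1 by fold z in z2; lra.
have H2 : INR N * x + 1 < INR N * y.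
  have : / INR N * INR N < (y - x) * INR N by apply: Rmult_lt_compat_r.
  by rewrite Rinv_l; lra.
apply/(Rmult_lt_reg_l (INR N)) => //.
have -> : INR N * (IZR z / INR N) = IZR z by field; lra.
lra.
Qed.

Lemma encR_lt x y : x < y -> encR x <> encR y.
Proof.
move=> /dense [p [h1 h2]] E.
have := congr1 (fun f => f (pickle p)) E; rewrite /encR /= pickleK.
case: Rlt_dec => a; case: Rlt_dec => b //; lra.
Qed.

Lemma encR_inj : injective encR.
Proof.
move=> x y E; case: (Rtotal_order x y) => [h|[//|h]].
  by case: (encR_lt h).
by case: (encR_lt h).
Qed.

Fixpoint ps (b : nat -> bool) (N : nat) : R :=
  match N with 0%N => 0 | S N => ps b N + (if b N then (/3) ^ (S N) else 0) end.

Lemma term_ge0 (b : nat -> bool) N : 0 <= (if b N then (/3) ^ (S N) else 0).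
Proof. case: (b N); [apply: Rlt_le; apply: pow_lt; lra | lra]. Qed.

Lemma ps_mono b m j : ps b m <= ps b (m + j)%N.
Proof.
elim: j => [|j IH]; first by rewrite addn0; apply: Rle_refl.
rewrite addnS; have := term_ge0 b (m + j)%N; simpl; lra.
Qed.

Lemma ps_tail b m j : ps b (m + j)%N - ps b m <= /2 * (/3)^m * (1 - (/3)^j).
Proof.
elim: j => [|j IH]; first by rewrite addn0 /=; lra.
rewrite addnS.
change (ps b (m + j)%N + (if b (m + j)%N then (/3)^(S (m + j)) else 0) - ps b m <= /2 * (/3)^m * (1 - (/3)^(S j))).
have E2 : (/3)^(S j) = (/3)^j * /3 by simpl; ring.
rewrite E2.
have E : (/3) ^ (S (m + j)) = (/3)^m * (/3)^j * /3.
  change ((/3)^(S (Nat.add m j)) = (/3)^m * (/3)^j * /3); simpl; rewrite pow_add; ring.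
have P1 : 0 < (/3)^m by apply: pow_lt; lra.
have P2 : 0 < (/3)^j by apply: pow_lt; lra.
case: (b (m + j)%N); rewrite ?E; nra.
Qed.

Lemma ps_bound b N : 0 <= ps b N <= /2.
Proof.
have := ps_mono b 0 N; have := ps_tail b 0 N; rewrite !add0n /=.
have : 0 < (/3)^N by apply: pow_lt; lra.
nra.
Qed.

Definition Eb b := fun x => exists N, x = ps b N.
Lemma Eb_bound b : bound (Eb b).
Proof. by exists (/2) => x [N ->]; case: (ps_bound b N). Qed.
Lemma Eb_ne b : exists x, Eb b x.
Proof. by exists (ps b 0); exists 0%N. Qed.

Definition dec (b : nat -> bool) : R := proj1_sig (completeness (Eb b) (Eb_bound b) (Eb_ne b)).

Lemma dec_lub b : is_lub (Eb b) (dec b).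
Proof. exact: proj2_sig (completeness (Eb b) (Eb_bound b) (Eb_ne b)). Qed.

Lemma dec_lt b b' k : (forall j, (j < k)%N -> b j = b' j) -> b k = true -> b' k = false ->
  dec b' < dec b.
Proof.
move=> Hj bk bk'.
have Peq : forall N, (N <= k)%N -> ps b N = ps b' N.
  elim=> [//|N IH] /= hN; rewrite IH ?Hj //; exact: ltnW.
set P := ps b k.
have P3 : 0 < (/3) ^ k.+1 by apply: pow_lt; lra.
have L1 : P + (/3)^k.+1 <= dec b.
  have [ub _] := dec_lub b; apply: ub; exists k.+1 => /=; by rewrite bk.
have L2 : dec b' <= P + /2 * (/3)^k.+1.
  have [_ lst] := dec_lub b'; apply: lst => x [N ->].
  case: (leqP N k) => hN.
    have := ps_mono b' N (k - N); rewrite subnKC // -(Peq k) // -/P; lra.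
  have -> : N = (k.+1 + (N - k.+1))%N by rewrite subnKC.
  have := ps_tail b' k.+1 (N - k.+1).
  have : 0 <= (/3)^(N - k.+1) by apply: pow_le; lra.
  have -> : ps b' k.+1 = P by rewrite /= bk' -(Peq k) // /P; lra.
  nra.
lra.
Qed.

Lemma dec_inj : injective dec.
Proof.
move=> b b' E; apply: NNPP => ne.
have : exists k, b k != b' k.
  apply: NNPP => H; apply: ne; apply: functional_extensionality => k.
  by apply/eqP; apply: negbNE; apply/negP => h; apply: H; exists k.
move=> ex; case: (ex_minnP ex) => k hk hmin.
have Hj : forall j, (j < k)%N -> b j = b' j.
  move=> j jk; apply/eqP; apply: negbNE; apply/negP => h.
  by have := hmin j h; rewrite leqNgt jk.
move: hk; case Bk: (b k); case Bk': (b' k) => // _.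
  by have := dec_lt Hj Bk Bk'; lra.
have Hj' : forall j, (j < k)%N -> b' j = b j by move=> j /Hj.
by have := dec_lt Hj' Bk' Bk; lra.
Qed.
Section Geo.
Variable m : nat.

Definition ev (i : 'I_m) : Rn m := fun j => if j == i then 1 else 0.

Lemma sum_ge0 (F : 'I_m -> R) : (forall j, 0 <= F j) -> 0 <= \big[Rplus/0]_(j < m) F j.
Proof.
move=> H; apply: (big_ind (fun x => 0 <= x)) => //; [lra | move=> x y; lra].
Qed.

Lemma sum_two (F : 'I_m -> R) a b : a != b -> (forall j, j != a -> j != b -> F j = 0) ->
  \big[Rplus/0]_(j < m) F j = F a + F b.
Proof.
move=> ab H; rewrite (bigD1 a) //= (bigD1 b) /=; last by rewrite eq_sym.
rewrite big1; first by lra.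
by move=> j /andP [ja jb]; apply: H.
Qed.

Lemma sum_ev (x : Rn m) i :
  \big[Rplus/0]_(j < m) Rsqr (x j - ev i j) = \big[Rplus/0]_(j < m) Rsqr (x j) + 1 - 2 * x i.
Proof.
rewrite (bigD1 i) // [in RHS](bigD1 i) //=.
rewrite (eq_bigr (fun j => Rsqr (x j))); last first.
  by move=> j ji; rewrite /ev (negbTE ji) Rminus_0_r.
by rewrite /ev eqxx; unfold Rsqr; ring.
Qed.

Lemma coord_eq (x y : Rn m) i :
  \big[Rplus/0]_(j < m) Rsqr (y j) = \big[Rplus/0]_(j < m) Rsqr (x j) ->
  edist y (ev i) = edist x (ev i) -> y i = x i.
Proof.
move=> H1 H2.
have := sqrt_inj _ _ (sum_ge0 (fun j => Rle_0_sqr _)) (sum_ge0 (fun j => Rle_0_sqr _)) H2.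
rewrite !sum_ev H1; lra.
Qed.

Lemma sqnorm_ev i : sqnorm (ev i) = 1.
Proof.
rewrite /sqnorm (bigD1 i) //= big1; first by rewrite /ev eqxx; unfold Rsqr; ring.
by move=> j ji; rewrite /ev (negbTE ji); apply: Rsqr_0.
Qed.

Definition negc (i : 'I_m) (x : Rn m) : Rn m := fun j => if j == i then - x j else x j.
Definition swc (a b : 'I_m) (x : Rn m) : Rn m := fun j => x (tperm a b j).

Lemma negcK i x : negc i (negc i x) = x.
Proof. by apply: functional_extensionality => j; rewrite /negc; case: eqP => _ //; lra. Qed.
Lemma swcK a b x : swc a b (swc a b x) = x.
Proof. by apply: functional_extensionality => j; rewrite /swc tpermK. Qed.

Lemma edist_negc i x y : edist (negc i x) (negc i y) = edist x y.
Proof.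
rewrite /edist; congr sqrt; apply: eq_bigr => j _; rewrite /negc.
by case: eqP => _ //; unfold Rsqr; ring.
Qed.
Lemma sqnorm_negc i x : sqnorm (negc i x) = sqnorm x.
Proof.
rewrite /sqnorm; apply: eq_bigr => j _; rewrite /negc.
by case: eqP => _ //; unfold Rsqr; ring.
Qed.
Lemma edist_swc a b x y : edist (swc a b x) (swc a b y) = edist x y.
Proof.
rewrite /edist /swc; congr sqrt.
by rewrite [in RHS](reindex_inj (@perm_inj _ (tperm a b))).
Qed.
Lemma sqnorm_swc a b x : sqnorm (swc a b x) = sqnorm x.
Proof.
by rewrite /sqnorm /swc [in RHS](reindex_inj (@perm_inj _ (tperm a b))).
Qed.

Lemma iso_inv (F : Rn m -> Rn m) : (forall x, F (F x) = x) ->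
  (forall x y, edist (F x) (F y) = edist x y) -> isometry (@edist m) F.
Proof. by move=> K D; split=> // y; exists (F y). Qed.

End Geo.

Definition Sv (p : nat) (s : Sphere p) : Rn p.+1 := proj1_sig s.

Lemma sph_eq p (s t : Sphere p) : Sv s = Sv t -> s = t.
Proof.
case: s => x hx; case: t => y hy /= E; subst y; f_equal; apply: proof_irrelevance.
Qed.

Definition liftS p (F : Rn p.+1 -> Rn p.+1) (HF : forall x, sqnorm (F x) = sqnorm x)
  (s : Sphere p) : Sphere p := exist _ (F (Sv s)) (eq_trans (HF _) (proj2_sig s)).

Lemma iso_liftS p F HF : (forall x, F (F x) = x) ->
  (forall x y, edist (F x) (F y) = edist x y) -> isometry (@sdist p) (@liftS p F HF).
Proof.
move=> K D; split; first by move=> x y; rewrite /sdist /liftS /=; apply: D.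
by move=> y; exists (liftS HF y); apply: sph_eq; rewrite /liftS /Sv /= K.
Qed.
Section RnPart.
Variables (m : nat) (a b c : 'I_m).
Hypotheses (ab : a != b) (ac : a != c) (bc : b != c).

Definition W1n (x : Rn m) := x a = 0 /\ x b = 0.
Definition Wn (x : Rn m) := W1n x \/ x = ev a \/ x = ev b.

Lemma at_ (x y : Rn m) j : x = y -> x j = y j.
Proof. by move->. Qed.

Lemma negc_fix (i : 'I_m) (x : Rn m) : x i = 0 -> negc i x = x.
Proof.
move=> h; apply: functional_extensionality => j; rewrite /negc.
by case: eqP => // ->; rewrite h; lra.
Qed.

Lemma swc_fix (x : Rn m) : W1n x -> swc a b x = x.
Proof.
case=> ha hb; apply: functional_extensionality => j; rewrite /swc.
by case: tpermP => [->|->|//]; rewrite ?ha ?hb.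
Qed.

Lemma ev_at (i j : 'I_m) : ev i j = if j == i then 1 else 0.
Proof. by []. Qed.

Lemma ba : b != a. Proof. by rewrite eq_sym. Qed.

Lemma negc_ev_other (i k : 'I_m) : k != i -> negc i (ev k) = ev k.
Proof. by move=> ki; apply: negc_fix; rewrite ev_at eq_sym (negbTE ki). Qed.

Lemma negc_ev_self (i : 'I_m) : negc i (ev i) i = -1.
Proof. by rewrite /negc eqxx ev_at eqxx. Qed.

Lemma notP_Rn : ~ prop_P (isometry (@edist m)) Wn.
Proof.
have Hab := ab; have Hba := ba.
apply: (@notP_generic _ _ W1n (ev a) (ev b) (negc a) (negc b) (swc a b)).
- exact: iso_inv (@negcK m a) (@edist_negc m a).
- exact: iso_inv (@negcK m b) (@edist_negc m b).
- exact: iso_inv (@swcK m a b) (@edist_swc m a b).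
- exact: negcK.
- exact: negcK.
- exact: swcK.
- by move=> x [h _]; apply: negc_fix.
- by move=> x [_ h]; apply: negc_fix.
- exact: swc_fix.
- by case; rewrite negc_ev_self; lra.
- by move/(at_ a); rewrite negc_ev_self ev_at eqxx; lra.
- by move/(at_ a); rewrite negc_ev_self ev_at (negbTE Hab); lra.
- exact: negc_ev_other.
- exact: negc_ev_other.
- by case=> _; rewrite negc_ev_self; lra.
- by move/(at_ b); rewrite negc_ev_self ev_at (negbTE Hba); lra.
- by move/(at_ b); rewrite negc_ev_self ev_at eqxx; lra.
- apply: functional_extensionality => j; rewrite /swc !ev_at.
  by case: tpermP => [->|->|/eqP/negbTE -> /eqP/negbTE ->]; rewrite ?eqxx ?(negbTE Hab) ?(negbTE Hba).
- apply: functional_extensionality => j; rewrite /swc !ev_at.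
  by case: tpermP => [->|->|/eqP/negbTE -> /eqP/negbTE ->]; rewrite ?eqxx ?(negbTE Hab) ?(negbTE Hba).
- by move/(at_ a); rewrite !ev_at eqxx (negbTE Hab); lra.
Qed.

Lemma stab_Rn : trivial_pointwise_stabilizer (isometry (@edist m)) Wn.
Proof.
move=> g [Hd _] Hfix x.
have W0 : Wn (fun _ => 0) by left.
have g0 := Hfix _ W0.
have Wi : forall i, Wn (ev i).
  move=> i; case: (eqVneq i a) => [->|ia]; first by right; left.
  case: (eqVneq i b) => [->|ib]; first by right; right.
  by left; split; rewrite ev_at eq_sym ?(negbTE ia) ?(negbTE ib).
apply: functional_extensionality => i.
apply: coord_eq.
  have := Hd x (fun _ => 0); rewrite g0 /edist => E.
  have := sqrt_inj _ _ (sum_ge0 (fun j => Rle_0_sqr _)) (sum_ge0 (fun j => Rle_0_sqr _)) E.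
  by rewrite (eq_bigr (fun j => Rsqr (g x j))) => [->|j _]; [apply: eq_bigr => j _ | ]; rewrite Rminus_0_r.
by rewrite -{1}(Hfix _ (Wi i)) Hd.
Qed.

Definition lineR (t : R) : Rn m := fun j => if j == c then t else 0.

Lemma line_W t : Wn (lineR t).
Proof. by left; split; rewrite /lineR ?(negbTE ac) ?(negbTE bc). Qed.

Lemma line_inj : injective lineR.
Proof. by move=> s t /(at_ c); rewrite /lineR eqxx. Qed.

End RnPart.

Definition encRn m (x : Rn m) : nat -> bool := fun k =>
  if (unpickle k : option ('I_m * nat)) is Some (i, j) then encR (x i) j else false.

Lemma encRn_inj m : injective (@encRn m).
Proof.
move=> x y E; apply: functional_extensionality => i; apply: encR_inj.
apply: functional_extensionality => j.
by have := congr1 (fun f => f (pickle (i, j))) E; rewrite /encRn /= pickleK.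
Qed.

Section SPart.
Variables (p : nat) (a b c e : 'I_p.+1).
Hypotheses (ab : a != b) (ac : a != c) (bc : b != c) (ae : a != e) (be : b != e) (ce : c != e).

Definition W1s (s : Sphere p) := Sv s a = 0 /\ Sv s b = 0.
Definition Es (i : 'I_p.+1) : Sphere p := exist _ (ev i) (sqnorm_ev i).
Definition Ws (s : Sphere p) := W1s s \/ s = Es a \/ s = Es b.

Definition Ng (i : 'I_p.+1) : Sphere p -> Sphere p := @liftS p (negc i) (sqnorm_negc i).
Definition Sw : Sphere p -> Sphere p := @liftS p (swc a b) (sqnorm_swc a b).

Lemma Sv_eq (s t : Sphere p) j : s = t -> Sv s j = Sv t j.
Proof. by move->. Qed.

Lemma notP_S : ~ prop_P (isometry (@sdist p)) Ws.
Proof.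
have Hba : b != a by rewrite eq_sym.
apply: (@notP_generic _ _ W1s (Es a) (Es b) (Ng a) (Ng b) Sw).
- exact: iso_liftS (@negcK _ a) (@edist_negc _ a).
- exact: iso_liftS (@negcK _ b) (@edist_negc _ b).
- exact: iso_liftS (@swcK _ a b) (@edist_swc _ a b).
- by move=> x; apply: sph_eq; rewrite /Ng /liftS /Sv /= negcK.
- by move=> x; apply: sph_eq; rewrite /Ng /liftS /Sv /= negcK.
- by move=> x; apply: sph_eq; rewrite /Sw /liftS /Sv /= swcK.
- by move=> x [h _]; apply: sph_eq; rewrite /Ng /liftS /Sv /= negc_fix.
- by move=> x [_ h]; apply: sph_eq; rewrite /Ng /liftS /Sv /= negc_fix.
- by move=> x h; apply: sph_eq; rewrite /Sw /liftS /Sv /= swc_fix.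
- by case; rewrite /Ng /liftS /Sv /= negc_ev_self; lra.
- by move/(Sv_eq a); rewrite /Ng /liftS /Sv /= negc_ev_self ev_at eqxx; lra.
- by move/(Sv_eq a); rewrite /Ng /liftS /Sv /= negc_ev_self ev_at (negbTE ab); lra.
- by apply: sph_eq; rewrite /Ng /liftS /Sv /= negc_ev_other.
- by apply: sph_eq; rewrite /Ng /liftS /Sv /= negc_ev_other.
- by case=> _; rewrite /Ng /liftS /Sv /= negc_ev_self; lra.
- by move/(Sv_eq b); rewrite /Ng /liftS /Sv /= negc_ev_self ev_at (negbTE Hba); lra.
- by move/(Sv_eq b); rewrite /Ng /liftS /Sv /= negc_ev_self ev_at eqxx; lra.
- apply: sph_eq; rewrite /Sw /liftS /Sv /=.
  apply: functional_extensionality => j; rewrite /swc !ev_at.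
  by case: tpermP => [->|->|/eqP/negbTE -> /eqP/negbTE ->]; rewrite ?eqxx ?(negbTE ab) ?(negbTE Hba).
- apply: sph_eq; rewrite /Sw /liftS /Sv /=.
  apply: functional_extensionality => j; rewrite /swc !ev_at.
  by case: tpermP => [->|->|/eqP/negbTE -> /eqP/negbTE ->]; rewrite ?eqxx ?(negbTE ab) ?(negbTE Hba).
- by move/(Sv_eq a); rewrite /Es /Sv /= !ev_at eqxx (negbTE ab); lra.
Qed.

Lemma stab_S : trivial_pointwise_stabilizer (isometry (@sdist p)) Ws.
Proof.
move=> g [Hd _] Hfix s.
have Wi : forall i, Ws (Es i).
  move=> i; case: (eqVneq i a) => [->|ia]; first by right; left.
  case: (eqVneq i b) => [->|ib]; first by right; right.
  by left; split; rewrite /Es /Sv /= ev_at eq_sym ?(negbTE ia) ?(negbTE ib).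
apply: sph_eq; apply: functional_extensionality => i.
apply: coord_eq.
  by have := proj2_sig (g s); have := proj2_sig s; rewrite /sqnorm /Sv => -> ->.
have := Hd s (Es i); rewrite (Hfix _ (Wi i)) /sdist /Sv /Es /=.
by [].
Qed.

Definition cpt (t : R) : Rn p.+1 :=
  fun j => if j == c then t / sqrt (1 + t * t) else if j == e then 1 / sqrt (1 + t * t) else 0.

Lemma sq_cpt t : sqnorm (cpt t) = 1.
Proof.
rewrite /sqnorm (@sum_two _ _ c e) //; last first.
  by move=> j /negbTE jc /negbTE je; rewrite /cpt jc je; apply: Rsqr_0.
have ec : e != c by rewrite eq_sym.
rewrite /cpt eqxx (negbTE ec) eqxx.
have h1 : 0 < 1 + t * t by nra.
have h2 := sqrt_sqrt _ (Rlt_le _ _ h1).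
have h3 := sqrt_lt_R0 _ h1.
unfold Rsqr.
have -> : t / sqrt (1 + t * t) * (t / sqrt (1 + t * t)) + 1 / sqrt (1 + t * t) * (1 / sqrt (1 + t * t))
  = (t * t + 1) / (sqrt (1 + t * t) * sqrt (1 + t * t)) by field; lra.
rewrite h2; field; lra.
Qed.

Definition cS (t : R) : Sphere p := exist _ (cpt t) (sq_cpt t).

Lemma cS_W t : Ws (cS t).
Proof. by left; split; rewrite /cS /Sv /cpt /= ?(negbTE ac) ?(negbTE ae) ?(negbTE bc) ?(negbTE be). Qed.

Lemma cS_inj : injective cS.
Proof.
move=> s t E.
have Ec := Sv_eq c E; have Ee := Sv_eq e E.
have ec : e != c by rewrite eq_sym.
move: Ec Ee; rewrite /cS /Sv /cpt /= eqxx (negbTE ec) eqxx => Ec Ee.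
have h1 : 0 < 1 + s * s by nra.
have h2 : 0 < 1 + t * t by nra.
have h3 := sqrt_lt_R0 _ h1; have h4 := sqrt_lt_R0 _ h2.
have -> : s = (s / sqrt (1 + s * s)) / (1 / sqrt (1 + s * s)) by field; lra.
rewrite Ec Ee; field; lra.
Qed.

End SPart.

Lemma encS_inj p : injective (fun s : Sphere p => encRn (Sv s)).
Proof. by move=> s t /encRn_inj /sph_eq. Qed.

Theorem theorem2 (n : nat) (hn : (3 <= n)%N) :
  theorem2_conclusion (@edist n) /\ theorem2_conclusion (@sdist n).
Proof.
case: n hn => [|[|[|k]]] // _.
split.
  pose a : 'I_k.+3 := @Ordinal k.+3 0 isT.
  pose b : 'I_k.+3 := @Ordinal k.+3 1 isT.
  pose c : 'I_k.+3 := @Ordinal k.+3 2 isT.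
  have ab : a != b by [].
  have ac : a != c by [].
  have bc : b != c by [].
  apply: (@concl_generic _ _ (Wn a b) (@encRn _) (fun bs => lineR c (dec bs))).
  - exact: encRn_inj.
  - by move=> x y /line_inj/dec_inj.
  - by move=> bs; apply: line_W.
  - exact: stab_Rn.
  - exact: notP_Rn.
pose a : 'I_k.+4 := @Ordinal k.+4 0 isT.
pose b : 'I_k.+4 := @Ordinal k.+4 1 isT.
pose c : 'I_k.+4 := @Ordinal k.+4 2 isT.
pose e : 'I_k.+4 := @Ordinal k.+4 3 isT.
have ab : a != b by [].
have ac : a != c by [].
have bc : b != c by [].
have ae : a != e by [].
have be : b != e by [].
have ce : c != e by [].
apply: (@concl_generic _ _ (Ws a b) (fun s => encRn (Sv s)) (fun bs => cS ce (dec bs))).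
- exact: encS_inj.
- by move=> x y /cS_inj/dec_inj.
- by move=> bs; apply: cS_W.
- exact: stab_S.
- exact: notP_S.
Qed.
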